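(* Let $f:\mathbb{R}\to\mathbb{R}$ be a differentiable function which is nowhere monotone. Then the set $D_{f'}$ of discontinuity points of its derivative $f'$ is not a closed subset of $\mathbb{R}$.
   Context: A function $f:\mathbb{R}\to\mathbb{R}$ is nowhere monotone if there is no nondegenerate interval $I\subseteq\mathbb{R}$ on which $f$ is monotone (nondecreasing or nonincreasing); equivalently, in every such interval there are points $x_1<y_1$ with $f(x_1)<f(y_1)$ and points $x_2<y_2$ with $f(x_2)>f(y_2)$. *)

(* Defs.v *)
From Stdlib Require Import Reals.
From Coquelicot Require Import Coquelicot.
Open Scope R_scope.

Definition monotone_on (f : R -> R) (a b : R) : Prop :=
  (forall x y, a < x -> x <= y -> y < b -> f x <= f y) \/
  (forall x y, a < x -> x <= y -> y < b -> f y <= f x).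

(* Every nondegenerate interval contains a nondegenerate open interval
   (a,b), and monotonicity is inherited by subintervals, so it suffices
   to quantify over open intervals with a < b. *)
Definition nowhere_monotone (f : R -> R) : Prop :=
  forall a b, a < b -> ~ monotone_on f a b.

Definition discont_set (g : R -> R) : R -> Prop :=
  fun x => ~ continuous g x.

(* Main.v *)
Require Import Defs.
From Stdlib Require Import Reals Lra ClassicalEpsilon Classical.
From Coquelicot Require Import Coquelicot.
Open Scope R_scope.

Lemma ball_R (x e y : R) : ball x e y <-> Rabs (y - x) < e.
Proof. reflexivity. Qed.

Lemma cont_eps (g : R -> R) x : continuous g x ->
  forall e, 0 < e -> exists d, 0 < d /\ forall y, Rabs (y - x) < d -> Rabs (g y - g x) < e.
Proof.
  intros H e He.
  apply continuity_pt_filterlim in H.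
  destruct (H e He) as [d [Hd0 Hd]].
  exists d; split; [lra|].
  intros y Hy.
  destruct (Req_dec y x) as [->|Hne]; [rewrite Rminus_diag, Rabs_R0; lra|].
  apply Hd. split. split; [exact I|congruence]. exact Hy.
Qed.

Lemma eps_cont (g : R -> R) x :
  (forall e, 0 < e -> exists d, 0 < d /\ forall y, Rabs (y - x) < d -> Rabs (g y - g x) < e) ->
  continuous g x.
Proof.
  intros H. apply continuity_pt_filterlim.
  intros e He. destruct (H e He) as [d [Hd H2]].
  exists d; split; [lra|]. intros y [_ Hy]. apply H2. exact Hy.
Qed.

Lemma mono_of_neg (f : R -> R) a b : (forall x, ex_derive f x) ->
  (forall x, a < x < b -> Derive f x <= 0) ->
  forall x y, a < x -> x <= y -> y < b -> f y <= f x.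
Proof.
  intros Hd Hneg x y Hx Hxy Hy.
  destruct (Req_dec x y) as [->|Hne]; [lra|].
  destruct (MVT_gen f x y (Derive f)) as [c [Hc Heq]].
  - intros z _. apply Derive_correct, Hd.
  - intros z _. apply continuity_pt_filterlim; exact (ex_derive_continuous f z (Hd z)).
  - rewrite Rmin_left in Hc by lra. rewrite Rmax_right in Hc by lra.
    assert (Derive f c <= 0) by (apply Hneg; lra).
    assert (Derive f c * (y - x) <= 0).
    { apply Rmult_le_0_r; lra. }
    lra.
Qed.

Lemma nest (P : nat -> R -> R -> Prop) a0 b0 : a0 < b0 ->
  (forall k a b, a0 <= a -> a < b -> b <= b0 ->
     exists a' b', a < a' /\ a' < b' /\ b' < b /\ P k a' b') ->
  exists x, forall k, exists a' b', a' < x /\ x < b' /\ P k a' b'.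
Proof.
  intros Hab H.
  assert (H' : forall k (p : R * R), exists q : R * R,
     (a0 <= fst p /\ fst p < snd p /\ snd p <= b0) ->
     fst p < fst q /\ fst q < snd q /\ snd q < snd p /\ P k (fst q) (snd q)).
  { intros k [a b]. simpl.
    destruct (classic (a0 <= a /\ a < b /\ b <= b0)) as [Hc|Hc].
    - destruct Hc as [h1 [h2 h3]]. destruct (H k a b h1 h2 h3) as [a' [b' Hq]].
      exists (a', b'). intros _. exact Hq.
    - exists (0, 0). intros Hc'. contradiction. }
  set (sel := fun k p => proj1_sig (constructive_indefinite_description _ (H' k p))).
  assert (Hsel : forall k p, a0 <= fst p /\ fst p < snd p /\ snd p <= b0 ->
     fst p < fst (sel k p) /\ fst (sel k p) < snd (sel k p) /\ snd (sel k p) < snd p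
     /\ P k (fst (sel k p)) (snd (sel k p))).
  { intros k p. unfold sel. destruct (constructive_indefinite_description _ (H' k p)); simpl. auto. }
  set (s := fix s n := match n with O => (a0, b0) | S m => sel m (s m) end).
  assert (Hinv : forall n, a0 <= fst (s n) /\ fst (s n) < snd (s n) /\ snd (s n) <= b0).
  { induction n; simpl; [lra|]. destruct (Hsel n (s n) IHn) as [h1 [h2 [h3 _]]]. lra. }
  assert (HS : forall n, fst (s n) < fst (s (S n)) /\ fst (s (S n)) < snd (s (S n)) /\
      snd (s (S n)) < snd (s n) /\ P n (fst (s (S n))) (snd (s (S n)))).
  { intros n. simpl. apply Hsel, Hinv. }
  assert (Hmono : forall n m, (n <= m)%nat -> fst (s n) <= fst (s m) /\ snd (s m) <= snd (s n)).
  { intros n m Hnm. induction Hnm; [lra|]. destruct (HS m) as [h1 [h2 [h3 _]]]. lra. }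
  assert (Hab2 : forall n m, fst (s n) < snd (s m)).
  { intros n m. destruct (Nat.le_ge_cases n m) as [h|h].
    - destruct (Hmono n m h). destruct (Hinv m). lra.
    - destruct (Hmono m n h). destruct (Hinv n). lra. }
  set (E := fun y => exists n, y = fst (s n)).
  destruct (completeness E) as [x [Hub Hlub]].
  - exists b0. intros y [n ->]. destruct (Hinv n). lra.
  - exists a0. exists O. reflexivity.
  - exists x. intros k. exists (fst (s (S k))), (snd (s (S k))).
    destruct (HS k) as [_ [_ [_ Hp]]]. destruct (HS (S k)) as [h1 [h2 [h3 _]]].
    assert (fst (s (S (S k))) <= x) by (apply Hub; exists (S (S k)); reflexivity).
    assert (x <= snd (s (S (S k)))).
    { apply Hlub. intros y [n ->]. left. apply Hab2. }
    repeat split; try lra. exact Hp.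
Qed.
Lemma baire (F : nat -> R -> Prop) : (forall x, exists N, F N x) ->
  (forall N x, ~ F N x -> exists d, 0 < d /\ forall y, Rabs (y - x) < d -> ~ F N y) ->
  forall a b, a < b -> exists N a' b', a <= a' /\ a' < b' /\ b' <= b /\
     forall y, a' < y < b' -> F N y.
Proof.
  intros Hcov Hcl a0 b0 Hab. apply NNPP. intros Hn.
  destruct (nest (fun k a' b' => forall y, a' < y < b' -> ~ F k y) a0 b0 Hab) as [x Hx].
  - intros k a b h1 h2 h3.
    assert (Hy : exists y, a < y < b /\ ~ F k y).
    { apply NNPP. intros Hn2. apply Hn. exists k, a, b. repeat split; try lra.
      intros y Hy. apply NNPP. intros Hf. apply Hn2. exists y. auto. }
    destruct Hy as [y [Hy Hfy]].
    destruct (Hcl k y Hfy) as [d [Hd Hdd]].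
    set (e := Rmin d (Rmin (y - a) (b - y)) / 2).
    assert (He1 : e <= d / 2) by (unfold e; assert (Rmin d (Rmin (y - a) (b - y)) <= d) by apply Rmin_l; lra).
    assert (He2 : e <= (y - a) / 2) by (unfold e; assert (Rmin d (Rmin (y - a) (b - y)) <= Rmin (y-a) (b-y)) by apply Rmin_r;
        assert (Rmin (y-a) (b-y) <= y - a) by apply Rmin_l; lra).
    assert (He3 : e <= (b - y) / 2) by (unfold e; assert (Rmin d (Rmin (y - a) (b - y)) <= Rmin (y-a) (b-y)) by apply Rmin_r;
        assert (Rmin (y-a) (b-y) <= b - y) by apply Rmin_r; lra).
    assert (0 < Rmin d (Rmin (y - a) (b - y))) by (apply Rmin_glb_lt; [lra|apply Rmin_glb_lt; lra]). assert (He0 : 0 < e) by (unfold e; lra).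
    exists (y - e), (y + e). repeat split; try lra.
    intros z Hz. apply Hdd. apply Rabs_def1; lra.
  - destruct (Hcov x) as [N HN].
    destruct (Hx N) as [a' [b' [h1 [h2 h3]]]]. exact (h3 x (conj h1 h2) HN).
Qed.
Lemma ablt x a : Rabs x < a <-> -a < x < a.
Proof. unfold Rabs; destruct (Rcase_abs x); split; intros; lra. Qed.
Lemma able x a : Rabs x <= a <-> -a <= x <= a.
Proof. unfold Rabs; destruct (Rcase_abs x); split; intros; lra. Qed.

Lemma osc_small (g : nat -> R -> R) (h : R -> R) :
  (forall n x e, 0 < e -> exists d, 0 < d /\ forall y, Rabs (y - x) < d -> Rabs (g n y - g n x) < e) ->
  (forall x e, 0 < e -> exists N, forall n, (N <= n)%nat -> Rabs (g n x - h x) < e) ->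
  forall eps, 0 < eps -> forall a b, a < b -> exists a' b', a < a' /\ a' < b' /\ b' < b /\
    forall y z, a' < y < b' -> a' < z < b' -> Rabs (h y - h z) <= 4 * eps.
Proof.
  intros Hg Hconv eps Heps a b Hab.
  set (F := fun N x => forall m n, (N <= m)%nat -> (N <= n)%nat -> Rabs (g m x - g n x) <= eps).
  destruct (baire F) with (a := a) (b := b) as [N [a' [b' [h1 [h2 [h3 HF]]]]]]; auto.
  - intros x. destruct (Hconv x (eps/2)) as [N HN]; [lra|]. exists N.
    intros m n hm hn. assert (HN1 := HN m hm). assert (HN2 := HN n hn).
    rewrite ablt in *. apply able. lra.
  - intros N x Hn. unfold F in Hn.
    assert (exists m n, (N <= m)%nat /\ (N <= n)%nat /\ eps < Rabs (g m x - g n x)) as [m [n [hm [hn Hgt]]]].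
    { apply NNPP. intros Hc. apply Hn. intros m n hm hn. apply Rnot_lt_le. intros Hl.
      apply Hc. exists m, n. auto. }
    set (e := (Rabs (g m x - g n x) - eps) / 2).
    destruct (Hg m x e) as [d1 [hd1 Hd1]]; [unfold e; lra|].
    destruct (Hg n x e) as [d2 [hd2 Hd2]]; [unfold e; lra|].
    exists (Rmin d1 d2). split; [apply Rmin_glb_lt; lra|].
    intros y Hy HFy.
    assert (Rabs (y - x) < d1) by (eapply Rlt_le_trans; [exact Hy|apply Rmin_l]).
    assert (Rabs (y - x) < d2) by (eapply Rlt_le_trans; [exact Hy|apply Rmin_r]).
    specialize (HFy m n hm hn). specialize (Hd1 y H). specialize (Hd2 y H0).
    unfold e in *. revert Hgt HFy Hd1 Hd2.
    unfold Rabs; repeat destruct Rcase_abs; intros; lra.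
  - assert (Happ : forall y, a' < y < b' -> Rabs (h y - g N y) <= eps).
    { intros y Hy. apply Rnot_lt_le. intros Hl.
      destruct (Hconv y (Rabs (h y - g N y) - eps)) as [M HM]; [lra|].
      specialize (HM (max M N) (Nat.le_max_l _ _)).
      specialize (HF y Hy (max M N) N (Nat.le_max_r _ _) (le_n _)).
      revert Hl HM HF. unfold Rabs; repeat destruct Rcase_abs; intros; lra. }
    set (c := (a' + b') / 2).
    destruct (Hg N c eps Heps) as [d [hd Hd]].
    set (e := Rmin d ((b' - a') / 4) / 2).
    assert (0 < Rmin d ((b' - a') / 4)) by (apply Rmin_glb_lt; lra).
    assert (Rmin d ((b' - a') / 4) <= d) by apply Rmin_l.
    assert (Rmin d ((b' - a') / 4) <= (b' - a') / 4) by apply Rmin_r.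
    exists (c - e), (c + e). unfold c, e in *. repeat split; try lra.
    intros y z Hy Hz.
    assert (A1 := Happ y ltac:(lra)). assert (A2 := Happ z ltac:(lra)).
    assert (A3 := Hd y ltac:(apply ablt; lra)). assert (A4 := Hd z ltac:(apply ablt; lra)).
    rewrite able in A1, A2 |- *. rewrite ablt in A3, A4. lra.
Qed.
Lemma inv_small e : 0 < e -> exists k : nat, / (INR k + 1) < e.
Proof.
  intros He. destruct (archimed_cor1 e He) as [N [h1 h2]]. exists N.
  apply lt_0_INR in h2.
  eapply Rlt_trans; [|exact h1]. apply Rinv_lt_contravar; [apply Rmult_lt_0_compat|]; lra.
Qed.

Lemma cont_point_abs (g : nat -> R -> R) (h : R -> R) :
  (forall n x e, 0 < e -> exists d, 0 < d /\ forall y, Rabs (y - x) < d -> Rabs (g n y - g n x) < e) ->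
  (forall x e, 0 < e -> exists N, forall n, (N <= n)%nat -> Rabs (g n x - h x) < e) ->
  exists x, forall e, 0 < e -> exists d, 0 < d /\ forall y, Rabs (y - x) < d -> Rabs (h y - h x) < e.
Proof.
  intros Hg Hc.
  destruct (nest (fun k a' b' => forall y z, a' < y < b' -> a' < z < b' ->
       Rabs (h y - h z) <= 4 * / (INR k + 1)) 0 1) as [x Hx]; [lra| |].
  - intros k a b _ hab _. apply osc_small with (g := g); auto.
    apply Rinv_0_lt_compat. assert (0 <= INR k) by apply pos_INR. lra.
  - exists x. intros e He.
    destruct (inv_small (e / 4)) as [k Hk]; [lra|].
    destruct (Hx k) as [a' [b' [h1 [h2 h3]]]].
    exists (Rmin (x - a') (b' - x)). split; [apply Rmin_glb_lt; lra|].
    intros y Hy.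
    assert (Rmin (x - a') (b' - x) <= x - a') by apply Rmin_l.
    assert (Rmin (x - a') (b' - x) <= b' - x) by apply Rmin_r.
    rewrite ablt in Hy.
    assert (H4 := h3 y x ltac:(lra) ltac:(lra)). lra.
Qed.
Lemma deriv_cont_point (f : R -> R) : (forall x, ex_derive f x) -> exists x, continuous (Derive f) x.
Proof.
  intros Hd.
  assert (Hfc : forall x, continuous f x) by (intros x; exact (ex_derive_continuous f x (Hd x))).
  set (g := fun (n : nat) x => (f (x + / (INR n + 1)) - f x) * (INR n + 1)).
  destruct (cont_point_abs g (Derive f)) as [x Hx].
  - intros n x e He. unfold g.
    assert (Hn : 0 < INR n + 1) by (assert (0 <= INR n) by apply pos_INR; lra).
    set (e' := e / (2 * (INR n + 1))).
    assert (He' : 0 < e') by (unfold e'; apply Rdiv_lt_0_compat; lra).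
    destruct (cont_eps f x (Hfc x) e' He') as [d1 [hd1 Hd1]].
    destruct (cont_eps f (x + / (INR n + 1)) (Hfc _) e' He') as [d2 [hd2 Hd2]].
    exists (Rmin d1 d2). split; [apply Rmin_glb_lt; lra|].
    intros y Hy.
    assert (Rabs (y - x) < d1) by (eapply Rlt_le_trans; [exact Hy|apply Rmin_l]).
    assert (Rabs (y + / (INR n + 1) - (x + / (INR n + 1))) < d2).
    { replace (y + / (INR n + 1) - (x + / (INR n + 1))) with (y - x) by ring.
      eapply Rlt_le_trans; [exact Hy|apply Rmin_r]. }
    specialize (Hd1 y H). specialize (Hd2 _ H0).
    replace ((f (y + / (INR n + 1)) - f y) * (INR n + 1) - (f (x + / (INR n + 1)) - f x) * (INR n + 1))
      with (((f (y + / (INR n + 1)) - f (x + / (INR n + 1))) - (f y - f x)) * (INR n + 1)) by ring.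
    rewrite Rabs_mult, (Rabs_right (INR n + 1)) by lra.
    assert (e = 2 * e' * (INR n + 1)) by (unfold e'; field; lra).
    rewrite H1. apply Rmult_lt_compat_r; [lra|].
    rewrite ablt in Hd1, Hd2 |- *. lra.
  - intros x e He.
    assert (Hl := proj1 (is_derive_Reals f x (Derive f x)) (Derive_correct f x (Hd x))).
    destruct (Hl e He) as [delta Hdel].
    destruct (archimed_cor1 delta (cond_pos delta)) as [N [h1 h2]].
    exists N. intros n Hn. unfold g.
    apply le_INR in Hn. apply lt_0_INR in h2.
    assert (Hc : 0 < / (INR n + 1)) by (apply Rinv_0_lt_compat; lra).
    assert (Hlt : / (INR n + 1) < delta).
    { eapply Rlt_trans; [|exact h1]. apply Rinv_lt_contravar; [apply Rmult_lt_0_compat|]; lra. }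
    specialize (Hdel (/ (INR n + 1)) ltac:(lra) ltac:(rewrite Rabs_right; lra)).
    replace ((f (x + / (INR n + 1)) - f x) * (INR n + 1)) with ((f (x + / (INR n + 1)) - f x) / / (INR n + 1)).
    + exact Hdel.
    + unfold Rdiv. rewrite Rinv_inv. reflexivity.
  - exists x. apply eps_cont. exact Hx.
Qed.
Lemma reduce (f : R -> R) x0 : (forall x, ex_derive f x) -> nowhere_monotone f ->
  closed (discont_set (Derive f)) -> continuous (Derive f) x0 -> False.
Proof.
  intros Hd Hnm Hcl Hc0.
  assert (Hloc : locally x0 (fun y => ~ discont_set (Derive f) y)).
  { apply NNPP. intros Hn. exact (Hcl x0 Hn Hc0). }
  destruct Hloc as [eps Heps].
  assert (Hle : forall y, x0 - eps < y < x0 + eps -> Derive f y <= 0).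
  { intros y Hy. apply Rnot_lt_le. intros Hpos.
    assert (Hcy : continuous (Derive f) y).
    { apply NNPP. apply Heps. apply ball_R. apply Rabs_def1; lra. }
    destruct (cont_eps _ _ Hcy (Derive f y) Hpos) as [d [Hd0 Hdd]].
    apply (Hnm (y - d) (y + d)); [lra|]. left.
    intros u v Hu Huv Hv.
    assert (Hm := mono_of_neg (fun t => - f t) (y - d) (y + d)).
    assert (H1 : f v <= f u -> False -> True) by auto.
    cut (- f v <= - f u); [lra|].
    apply Hm; try lra.
    - intros t. exact (ex_derive_opp f t (Hd t)).
    - intros t Ht. rewrite (Derive_opp f t).
      assert (Rabs (Derive f t - Derive f y) < Derive f y).
      { apply Hdd. apply Rabs_def1; lra. }
      apply Rabs_def2 in H. lra. }
  apply (Hnm (x0 - eps) (x0 + eps)).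
  - destruct eps; simpl; lra.
  - right. apply mono_of_neg; auto.
Qed.

Theorem mainTheorem8 (f : R -> R) :
  (forall x, ex_derive f x) ->
  nowhere_monotone f ->
  ~ closed (discont_set (Derive f)).
Proof.
  intros Hd Hnm Hcl.
  destruct (deriv_cont_point f Hd) as [x0 Hx0].
  exact (reduce f x0 Hd Hnm Hcl Hx0).
Qed.
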